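(* Let $n>2k$ and $k\ge 3$ be integers. Let $f^*(n,k)$ denote the maximum of $\min\{|\mathcal A|,|\mathcal B|\}$ over all pairs $\mathcal A,\mathcal B\subset\binom{[n]}{k}$ such that $\mathcal A\cap\mathcal B=\emptyset$, $\mathcal A$ and $\mathcal B$ are cross-intersecting, and neither $\mathcal A$ nor $\mathcal B$ is a star. Then $$f^*(n,k)\ge\left\lfloor\frac12\left(\binom{n-1}{k-1}-\binom{n-2k}{k-1}\right)\right\rfloor+1.$$
   Context: $[n]=\{1,\dots,n\}$ and $\binom{[n]}{k}$ is the collection of all $k$-element subsets of $[n]$. Families $\mathcal A,\mathcal B$ are cross-intersecting if $A\cap B\neq\emptyset$ for all $A\in\mathcal A$, $B\in\mathcal B$. A family $\mathcal F$ is a star if there is $x\in[n]$ with $x\in F$ for all $F\in\mathcal F$. *)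

(* Defs.v *)
From mathcomp Require Import all_boot.
Set Implicit Arguments. Unset Strict Implicit. Unset Printing Implicit Defensive.

(* Ground set [n] is modelled as 'I_n = {0,...,n-1}. *)
Definition family (n : nat) := {set {set 'I_n}}.

Definition uniform n k (F : family n) : bool :=
  [forall S in F, #|S| == k].

Definition cross_intersecting n (A B : family n) : bool :=
  [forall S in A, forall T in B, S :&: T != set0].

Definition is_star n (F : family n) : bool :=
  [exists x : 'I_n, forall S in F, x \in S].

Definition admissible n k (AB : family n * family n) : bool :=
  [&& uniform k AB.1, uniform k AB.2,
      AB.1 :&: AB.2 == set0,
      cross_intersecting AB.1 AB.2,
      ~~ is_star AB.1 & ~~ is_star AB.2].

(* f^*(n,k): maximum of min(|A|,|B|) over admissible pairs (0 if none). *)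
Definition fstar (n k : nat) : nat :=
  \max_(AB : family n * family n | admissible k AB) minn #|AB.1| #|AB.2|.

(* Main.v *)
Require Import Defs.
From mathcomp Require Import all_boot zify.

Lemma card_rng N a b : b <= N -> #|[set i : 'I_N | a <= i < b]| = b - a.
Proof.
elim: b => [|b IH] hb.
  by rewrite sub0n; apply: eq_card0 => i; rewrite inE ltn0 andbF.
have hb' : b < N by [].
case: (leqP a b) => hab.
  have -> : [set i : 'I_N | a <= i < b.+1] = Ordinal hb' |: [set i : 'I_N | a <= i < b].
    apply/setP => i; rewrite !inE -val_eqE /=; case: i => i hi /=.
    by apply/idP/idP; lia.
  rewrite cardsU1 IH ?(ltnW hb) // inE /= ltnn andbF /=; lia.
have -> : b.+1 - a = 0 by lia.
apply: eq_card0 => i; rewrite inE; apply/negP => /andP [h1 h2]; lia.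
Qed.

Lemma ex_subset (T : finType) (R : {set T}) m :
  m <= #|R| -> exists2 R1 : {set T}, R1 \subset R & #|R1| = m.
Proof.
elim: m => [|m IH] hm; first by exists set0; rewrite ?sub0set ?cards0.
have [R1 sR1 cR1] := IH (ltnW hm).
have : R1 \proper R by rewrite properEcard sR1 cR1.
case/properP => _ [x xR xR1].
exists (x |: R1); last by rewrite cardsU1 xR1 cR1.
by rewrite subUset sub1set xR sR1.
Qed.

Lemma count_star (T : finType) (z : T) (C : {set T}) k : z \notin C -> 0 < k ->
  #|[set A : {set T} | [&& #|A| == k, z \in A & A :\ z \subset C]]| = 'C(#|C|, k.-1).
Proof.
move=> zC k0.
have -> : [set A : {set T} | [&& #|A| == k, z \in A & A :\ z \subset C]] =
   (fun A => z |: A) @: [set A : {set T} | A \subset C & #|A| == k.-1].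
  apply/setP => A; rewrite inE; apply/idP/imsetP.
    case/and3P => /eqP cA zA sA; exists (A :\ z); last by rewrite setD1K.
    rewrite inE sA /=; move: (cardsD1 z A); rewrite zA; lia.
  move=> [B]; rewrite inE => /andP [sB /eqP cB] ->.
  have zB : z \notin B by apply: contra zC; apply: (subsetP sB).
  rewrite cardsU1 zB cB setU11 setU1K //= sB andbT; apply/eqP; lia.
rewrite card_in_imset ?cards_draws // => A B.
rewrite !inE => /andP [sA _] /andP [sB _] e.
have zA : z \notin A by apply: contra zC; apply: (subsetP sA).
have zB : z \notin B by apply: contra zC; apply: (subsetP sB).
by rewrite -(setU1K zA) e setU1K.
Qed.

Lemma meet (T : finType) (A B : {set T}) : (A :&: B != set0) <-> exists x, x \in A /\ x \in B.
Proof.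
split; first by case/set0Pn => x; rewrite inE => /andP [] ; exists x.
by case=> x [h1 h2]; apply/set0Pn; exists x; rewrite inE h1 h2.
Qed.

Lemma main (n k : nat) (hnk : 2 * k < n.+1) (hk : 3 <= k) :
  ('C(n, k.-1) - 'C(n.+1 - 2 * k, k.-1)) %/ 2 + 1 <= fstar n.+1 k.
Proof.
pose z : 'I_n.+1 := ord0.
pose S := [set i : 'I_n.+1 | 0 < i < 2 * k].
pose GA := [set i : 'I_n.+1 | 0 < i < k.+1].
pose GB := [set i : 'I_n.+1 | k <= i < 2 * k].
pose F := [set T : {set 'I_n.+1} | [&& #|T| == k, z \in T & T :&: S != set0]].
pose P := [set T in F | T :&: GA == set0].
pose Q := [set T in F | T :&: GB == set0].
pose R := F :\: (P :|: Q).
pose sg (i : 'I_n.+1) : 'I_n.+1 := inord (if 0 < i < 2 * k then 2 * k - i else i).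
have hsgv i : (sg i : nat) = if 0 < i < 2 * k then 2 * k - i else i.
  by have hi := ltn_ord i; rewrite inordK //; case: ifP => _; lia.
have hsgK : involutive sg.
  move=> i; apply: ord_inj; rewrite hsgv hsgv.
  case: (boolP (0 < i < 2 * k)) => h1 /=.
    have h2 : 0 < 2 * k - i < 2 * k by lia.
    rewrite h2; lia.
  by rewrite (negbTE h1).
have sg_inj : injective sg := can_inj hsgK.
have memsg (T : {set 'I_n.+1}) x : (x \in sg @: T) = (sg x \in T).
  apply/imsetP/idP => [[y yT ->]|h]; first by rewrite hsgK.
  by exists (sg x); rewrite ?hsgK.
have sgS : sg @: S = S.
  apply/setP => x; rewrite memsg !inE hsgv.
  case: (boolP (0 < x < 2 * k)) => h1 /=; [apply/idP; lia | by rewrite (negbTE h1)].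
have sgGA : sg @: GA = GB.
  apply/setP => x; rewrite memsg !inE hsgv.
  case: (boolP (0 < x < 2 * k)) => h1 /=; [apply/idP/idP; lia | apply/idP/idP; lia].
have sgGB : sg @: GB = GA.
  apply/setP => x; rewrite memsg !inE hsgv.
  case: (boolP (0 < x < 2 * k)) => h1 /=; [apply/idP/idP; lia | apply/idP/idP; lia].
have sgz : sg z = z by apply: ord_inj; rewrite hsgv.
have sgF T : T \in F -> sg @: T \in F.
  rewrite !inE => /and3P [cT zT nT].
  rewrite card_imset // cT memsg sgz zT -sgS -imsetI; last by move=> ? ? _ _; apply: sg_inj.
  by rewrite imset_eq0.
have sgPQ T : T \in P -> sg @: T \in Q.
  rewrite inE => /andP [hF hA]; rewrite inE sgF //= -sgGA -imsetI ?imset_eq0 //.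
  by move=> ? ? _ _; apply: sg_inj.
have sgQP T : T \in Q -> sg @: T \in P.
  rewrite inE => /andP [hF hA]; rewrite inE sgF //= -sgGB -imsetI ?imset_eq0 //.
  by move=> ? ? _ _; apply: sg_inj.
pose sgs (T : {set 'I_n.+1}) := sg @: T.
have sgsK : involutive sgs.
  move=> T; rewrite /sgs -imset_comp (eq_imset _ (fun x => hsgK x)) imset_id.
  by [].
have cPQ : #|P| = #|Q|.
  apply/eqP; rewrite eqn_leq; apply/andP; split.
    rewrite -(card_imset P (can_inj sgsK)); apply: subset_leq_card.
    by apply/subsetP => _ /imsetP [T hT ->]; apply: sgPQ.
  rewrite -(card_imset Q (can_inj sgsK)); apply: subset_leq_card.
  by apply/subsetP => _ /imsetP [T hT ->]; apply: sgQP.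
have hPQ T : T \in P -> T \notin Q.
  rewrite !inE => /andP [hF hA]; apply/negP => /andP [_ hB].
  move: hF => /and3P [_ _ /meet [x [xT xS]]].
  have : (x \in GA) || (x \in GB) by move: xS; rewrite !inE; lia.
  case/orP => hx.
    have : T :&: GA != set0 by apply/meet; exists x.
    by rewrite hA.
  have : T :&: GB != set0 by apply/meet; exists x.
  by rewrite hB.
have sPF : P \subset F by apply/subsetP => T; rewrite inE => /andP [].
have sQF : Q \subset F by apply/subsetP => T; rewrite inE => /andP [].
have sPQ : P :|: Q \subset F by rewrite subUset sPF sQF.
have PQ0 : P :&: Q = set0.
  apply/setP => T; rewrite in_setI in_set0; apply/negbTE/negP => /andP [h1 h2].
  by move: (hPQ _ h1); rewrite h2.
have cF : #|F| = #|P| + #|Q| + #|R|.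
  have := subset_leq_card sPQ.
  rewrite /R cardsD (setIidPr sPQ) cardsU PQ0 cards0 subn0; lia.
have zS : z \notin S by rewrite inE.
pose C := [set i : 'I_n.+1 | 2 * k <= i].
have cC : #|C| = n.+1 - 2 * k.
  rewrite -(@card_rng n.+1) //; apply: eq_card => i; rewrite !inE ltn_ord andbT //.
have zC : z \notin C by rewrite inE /z /=; lia.
have zz : z \notin [set~ z] by rewrite !inE eqxx.
have cF0 := @count_star _ z _ k zz (ltnW (ltnW hk)).
have cF1 := @count_star _ z _ k zC (ltnW (ltnW hk)).
rewrite cardsC1 card_ord /= in cF0.
rewrite cC in cF1.
have e0 (T : {set 'I_n.+1}) : T :\ z \subset [set~ z].
  by apply/subsetP => x; rewrite !inE => /andP [].
have e1 (T : {set 'I_n.+1}) : (T :\ z \subset C) = (T :&: S == set0).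
  apply/idP/idP => h.
    apply/eqP/setP => x; rewrite !inE; apply/negbTE/negP => /andP [xT xS].
    have : x \in T :\ z.
      rewrite !inE xT andbT; apply/negP => /eqP xz; by move: xS; rewrite xz.
    move/(subsetP h); move: xS; rewrite !inE; clear -hk hnk; lia.
  apply/subsetP => x; rewrite !inE => /andP [xz xT].
  have xS : x \notin S.
    apply/negP => xS; have : T :&: S != set0 by apply/meet; exists x.
    by rewrite h.
  move: xS xz; rewrite !inE -val_eqE /=; clear -hk hnk; lia.
have cFv : #|F| = 'C(n, k.-1) - 'C(n.+1 - 2 * k, k.-1).
  rewrite -cF0 -cF1.
  set F0s := [set A : {set 'I_n.+1} | _] in cF0 *.
  set F1s := [set A : {set 'I_n.+1} | _].
  have sF10 : F1s \subset F0s.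
    by apply/subsetP => T; rewrite !inE => /and3P [-> -> _]; rewrite e0.
  have eF : F = F0s :\: F1s.
    apply/setP => T; rewrite !inE e0 e1.
    by case: (_ == k); case: (z \in T); case: (_ == set0).
  by rewrite eF cardsD (setIidPr sF10).
have hR : #|F| %/ 2 - #|P| <= #|R| by rewrite cF cPQ; clear -hk hnk; lia.
have [R1 sR1 cR1] := @ex_subset _ _ _ hR.
pose A' := P :|: R1.
pose B' := F :\: A'.
have R1PQ T : T \in R1 -> [&& T \in F, T \notin P & T \notin Q].
  move/(subsetP sR1); rewrite !inE.
  by case: (#|T| == k); case: (z \in T); case: (T :&: S == set0); case: (T :&: GA == set0); case: (T :&: GB == set0).
have sA'F : A' \subset F.
  rewrite subUset sPF; apply/subsetP => T /R1PQ /and3P [] //.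
have PR10 : P :&: R1 = set0.
  apply/setP => T; rewrite in_setI in_set0; apply/negbTE/negP => /andP [h1 /R1PQ].
  by rewrite h1 /= andbF.
have cA' : #|A'| = #|F| %/ 2.
  rewrite cardsU PR10 cards0 subn0 cR1 cF cPQ; clear -hk hnk; lia.
have cB' : #|B'| = #|F| - #|F| %/ 2 by rewrite cardsD (setIidPr sA'F) cA'.
have A'Q T : T \in A' -> (T \in F) && (T \notin Q).
  case/setUP => [hT|/R1PQ /and3P [-> _ ->] //].
  by rewrite (hPQ _ hT) (subsetP sPF).
have B'P T : T \in B' -> (T \in F) && (T \notin P).
  rewrite inE => /andP [h ->] /=; apply: contra h => hT.
  by rewrite inE hT.
have FnP T : T \in F -> T \notin P -> T :&: GA != set0.
  by move=> hF; rewrite inE hF.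
have FnQ T : T \in F -> T \notin Q -> T :&: GB != set0.
  by move=> hF; rewrite inE hF.
have zF T : T \in F -> z \in T by rewrite inE => /and3P [].
have cardF T : T \in F -> #|T| = k by rewrite inE => /and3P [/eqP].
have zGA : z \notin GA by rewrite inE.
have zGB : z \notin GB by rewrite inE /=; clear -hk hnk; lia.
have cGA : #|GA| = k by rewrite card_rng; clear -hk hnk; lia.
have cGB : #|GB| = k by rewrite card_rng; clear -hk hnk; lia.
pose P0 := [set i : 'I_n.+1 | ((i : nat) == 0) || (k < i < 2 * k)].
pose Q0 := [set i : 'I_n.+1 | 0 <= i < k].
have cQ0 : #|Q0| = k by rewrite card_rng; clear -hk hnk; lia.
have cP0 : #|P0| = k.
  have -> : P0 = z |: [set i : 'I_n.+1 | k.+1 <= i < 2 * k].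
    by apply/setP => x; rewrite !inE -val_eqE.
  rewrite cardsU1 card_rng ?inE /=; clear -hk hnk; lia.
have hk1 : k.+1 < n.+1 by clear -hk hnk; lia.
have h1 : 1 < n.+1 by clear -hk hnk; lia.
have hkk : k < n.+1 by clear -hk hnk; lia.
have P0P : P0 \in P.
  rewrite !inE cP0 eqxx /=; apply/andP; split.
    by apply/meet; exists (inord k.+1); rewrite !inE inordK //; clear -hk hnk; lia.
  apply/eqP/setP => x; rewrite !inE; apply/negbTE/negP; clear -hk hnk; lia.
have Q0Q : Q0 \in Q.
  rewrite !inE cQ0 eqxx /=; apply/andP; split; first (apply/andP; split).
  - by rewrite /z /=; clear -hk hnk; lia.
  - by apply/meet; exists (inord 1); rewrite !inE inordK //; clear -hk hnk; lia.
  apply/eqP/setP => x; rewrite !inE; apply/negbTE/negP; clear -hk hnk; lia.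
have P0A' : P0 \in A' by rewrite inE P0P.
have Q0B' : Q0 \in B'.
  rewrite inE (subsetP sQF) // andbT; apply/negP => /A'Q.
  by rewrite Q0Q andbF.
have hadm : admissible k (GA |: A', GB |: B').
  apply/andP; split; [|apply/and5P; split].
  - apply/forallP => T; apply/implyP => /setU1P [->|hT]; first by rewrite cGA.
    by case/andP: (A'Q _ hT) => /cardF ->.
  - apply/forallP => T; apply/implyP => /setU1P [->|hT]; first by rewrite cGB.
    by case/andP: (B'P _ hT) => /cardF ->.
  - apply/eqP/setP => T; rewrite in_setI in_set0; apply/negbTE/negP.
    case/andP => /setU1P hA /setU1P hB; case: hA hB => [->|hA] [e|hB].
    + move: (f_equal (fun X : {set 'I_n.+1} => (inord 1 : 'I_n.+1) \in X) e) => /=; rewrite !inE inordK //; clear -hk hnk; lia.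
    + by case/andP: (B'P _ hB) => /zF; rewrite (negbTE zGA).
    + by case/andP: (A'Q _ hA); rewrite e => /zF; rewrite (negbTE zGB).
    + by move: hB; rewrite inE hA.
  - apply/forallP => X; apply/implyP => /setU1P [->|hX];
      apply/forallP => Y; apply/implyP => /setU1P [->|hY].
    + by apply/meet; exists (inord k); rewrite !inE inordK //; clear -hk hnk; lia.
    + by case/andP: (B'P _ hY) => hF hP; rewrite setIC; apply: FnP.
    + by case/andP: (A'Q _ hX) => hF hQ; apply: FnQ.
    + apply/meet; exists z; split; apply: zF.
        by case/andP: (A'Q _ hX).
      by case/andP: (B'P _ hY).
  - apply/negP => /existsP [x /forallP hx].
    move: (implyP (hx GA) (setU11 _ _)) (implyP (hx P0) (setU1r _ P0A')).
    rewrite !inE; clear -hk hnk; lia.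
  - apply/negP => /existsP [x /forallP hx].
    move: (implyP (hx GB) (setU11 _ _)) (implyP (hx Q0) (setU1r _ Q0B')).
    rewrite !inE; clear -hk hnk; lia.
apply: leq_trans (leq_bigmax_cond _ hadm) => /=.
have GAA' : GA \notin A' by apply/negP => /A'Q /andP [/zF]; rewrite (negbTE zGA).
have GBB' : GB \notin B' by apply/negP => /B'P /andP [/zF]; rewrite (negbTE zGB).
rewrite leq_min !cardsU1 GAA' GBB' cA' cB' -cFv; apply/andP; split; clear -hk hnk; lia.
Qed.

Theorem proposition2p2 (n k : nat) (hnk : 2 * k < n) (hk : 3 <= k) :
  ('C(n.-1, k.-1) - 'C(n - 2 * k, k.-1)) %/ 2 + 1 <= fstar n k.
Proof.
case: n hnk => [|n] hnk; first by rewrite ltn0 in hnk.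
exact: main.
Qed.
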